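(* Let $\partial:\mathcal{F}\to C(G)$ be a derivation such that $(\partial f)\circ\varphi=\partial(f\circ\varphi)$ for all $f\in\mathcal F$. Then there exists a unique derivation $\delta_\partial:\mathcal{B}\to B$ such that $\delta_\partial(V)=0$ and $\delta_\partial(M_f)=M_{\partial f}$ for all $f\in\mathcal F$; moreover $\delta_\partial$ is invariant.
   Context: Setup: $G$ is an infinite compact (Hausdorff) abelian group, written additively, and $x_1\in G$ generates a dense cyclic subgroup; $x_n=nx_1$, $\varphi(x)=x+x_1$. $\widehat G$ is the group of continuous characters and $\mathcal{F}$ is their linear span in $C(G)$ (a $\varphi$-stable algebra). Let $H=\ell^2(\mathbb{Z})$ with canonical basis $\{E_l\}$; $VE_l=E_{l+1}$, $M_fE_l=f(x_l)E_l$, $\mathbb{L}E_l=lE_l$. $B=C^*(V,M_f:f\in C(G))$ (isomorphic to the crossed product $C(G)\rtimes_\varphi\mathbb Z$), and $\mathcal{B}$ is the $*$-subalgebra generated by $V,V^{-1},M_\chi$ ($\chi\in\widehat G$). A derivation is a linear map satisfying the Leibniz rule; $\delta:\mathcal B\to B$ is invariant if $e^{-i\theta\mathbb L}\delta(e^{i\theta\mathbb L}be^{-i\theta\mathbb L})e^{i\theta\mathbb L}=\delta(b)$ for all $\theta\in\mathbb R$, $b\in\mathcal B$. *)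

(* Defs.v *)
From HB Require Import structures.
From mathcomp Require Import all_boot all_order all_algebra.
From mathcomp Require Import all_classical all_reals all_analysis.
From mathcomp Require Import complex.
Import Order.TTheory GRing.Theory Num.Theory.
Import numFieldTopology.Exports numFieldNormedType.Exports.

Set Implicit Arguments.
Unset Strict Implicit.
Unset Printing Implicit Defensive.

Local Open Scope ring_scope.
Local Open Scope complex_scope.
Local Open Scope classical_set_scope.

(* The complex numbers C = R[i], seen as a numClosedFieldType so that
   MathComp-Analysis equips it with its norm topology. *)
Definition CC (R : realType) : numClosedFieldType := R[i].

Definition expi (R : realType) (t : R) : CC R := (cos t +i* sin t).

Definition is_char (R : realType) (G : topologicalZmodType) (chi : G -> CC R) :=
  [/\ continuous chi,
      (forall x y : G, chi (x + y) = chi x * chi y) &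
      (forall x : G, `|chi x| = 1)].

Definition Fspan (R : realType) (G : topologicalZmodType) (f : G -> CC R) :=
  exists s : seq (CC R * (G -> CC R)),
    (forall p, p \in s -> is_char p.2) /\
    f = (fun x => \sum_(p <- s) p.1 * p.2 x).

Definition phiG (G : topologicalZmodType) (x1 : G) : G -> G := fun x => x + x1.

Definition is_F_derivation (R : realType) (G : topologicalZmodType)
    (d : (G -> CC R) -> (G -> CC R)) :=
  [/\ (forall f, Fspan f -> continuous (d f)),
      (forall (c : CC R) f g, Fspan f -> Fspan g ->
          d (fun x => c * f x + g x) = (fun x => c * d f x + d g x)) &
      (forall f g, Fspan f -> Fspan g ->
          d (fun x => f x * g x) = (fun x => d f x * g x + f x * d g x))].

(* A (bounded) operator T on H = l^2(Z) is represented by its matrix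
   T k l = < E_k , T E_l >  w.r.t. the canonical basis {E_l}. *)
Definition op (R : realType) := int -> int -> CC R.

Definition op0 (R : realType) : op R := fun _ _ => 0.
Definition opadd (R : realType) (S T : op R) : op R := fun k l => S k l + T k l.
Definition opscale (R : realType) (c : CC R) (T : op R) : op R :=
  fun k l => c * T k l.
Definition opsub (R : realType) (S T : op R) : op R := fun k l => S k l - T k l.
Definition opadj (R : realType) (T : op R) : op R := fun k l => (T l k)^*.

Definition zwin (N : nat) : seq int :=
  [seq (i%:Z - N%:Z)%R | i <- iota 0 (N.*2).+1].

(* composition: (S T) k l = sum_m S k m * T m l  (limit of symmetric partial
   sums; this series converges absolutely whenever S and T are bounded) *)
Definition opmul (R : realType) (S T : op R) : op R :=
  fun k l => limn (fun N : nat => \sum_(m <- zwin N) S k m * T m l).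

(* ||T|| <= e : for every finitely supported vector u, ||T u|| <= e ||u||
   (finitely supported vectors are dense in l^2(Z)). *)
Definition opnorm_le (R : realType) (T : op R) (e : CC R) :=
  forall (u : int -> CC R) (N K : nat),
    (forall l : int, l \notin zwin N -> u l = 0) ->
    \sum_(k <- zwin K) `| \sum_(l <- zwin N) T k l * u l | ^+ 2
      <= e ^+ 2 * \sum_(l <- zwin N) `|u l| ^+ 2.

Definition Vop (R : realType) : op R := fun k l => (k == l + 1)%:R.
Definition Vinvop (R : realType) : op R := fun k l => (k + 1 == l)%:R.
Definition Mop (R : realType) (G : topologicalZmodType) (x1 : G) (f : G -> CC R)
  : op R := fun k l => (k == l)%:R * f (x1 *~ l).
Definition Uop (R : realType) (theta : R) : op R :=
  fun k l => (k == l)%:R * expi (theta * l%:~R).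

Definition star_alg_closed (R : realType) (S : set (op R)) :=
  [/\ (forall a b, S a -> S b -> S (opadd a b)),
      (forall c a, S a -> S (opscale c a)),
      (forall a b, S a -> S b -> S (opmul a b)) &
      (forall a, S a -> S (opadj a))].

Definition norm_closed (R : realType) (S : set (op R)) :=
  forall T : op R,
    (forall e : CC R, 0 < e -> exists A, S A /\ opnorm_le (opsub T A) e) -> S T.

Definition Bset (R : realType) (G : topologicalZmodType) (x1 : G) : set (op R) :=
  fun T => forall S : set (op R),
    star_alg_closed S -> norm_closed S -> S (Vop R) ->
    (forall f : G -> CC R, continuous f -> S (Mop x1 f)) -> S T.

Definition Bcal (R : realType) (G : topologicalZmodType) (x1 : G) : set (op R) :=
  fun T => forall S : set (op R),
    star_alg_closed S -> S (Vop R) -> S (Vinvop R) ->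
    (forall chi : G -> CC R, is_char chi -> S (Mop x1 chi)) -> S T.

Definition is_B_derivation (R : realType) (G : topologicalZmodType) (x1 : G)
    (delta : op R -> op R) :=
  [/\ (forall b, Bcal x1 b -> Bset x1 (delta b)),
      (forall (c : CC R) a b, Bcal x1 a -> Bcal x1 b ->
          delta (opadd (opscale c a) b) = opadd (opscale c (delta a)) (delta b)) &
      (forall a b, Bcal x1 a -> Bcal x1 b ->
          delta (opmul a b) = opadd (opmul (delta a) b) (opmul a (delta b)))].

Definition is_invariant (R : realType) (G : topologicalZmodType) (x1 : G)
    (delta : op R -> op R) :=
  forall (theta : R) (b : op R), Bcal x1 b ->
    opmul (opmul (Uop (- theta)) (delta (opmul (opmul (Uop theta) b) (Uop (- theta)))))
          (Uop theta)
    = delta b.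

(* Main.v *)
Require Import Defs.
From HB Require Import structures.
From mathcomp Require Import all_boot all_order all_algebra.
From mathcomp Require Import all_classical all_reals all_analysis.
From mathcomp Require Import complex.
From mathcomp Require Import zify.
Import Order.TTheory GRing.Theory Num.Theory.
Import numFieldTopology.Exports numFieldNormedType.Exports.
Local Open Scope ring_scope.
Local Open Scope classical_set_scope.

Lemma mem_zwin (m : int) (N : nat) :
  (m \in zwin N) = ((- N%:Z <= m) && (m <= N%:Z)).
Proof.
apply/mapP/idP.
  case=> i; rewrite mem_iota add0n => /andP [_ hi] ->.
  apply/andP; split; lia.
move=> /andP [h1 h2]; exists (absz (m + N%:Z)).
  rewrite mem_iota add0n leq0n /=; lia.
lia.
Qed.

Lemma zwin_uniq N : uniq (zwin N).
Proof.
rewrite map_inj_uniq ?iota_uniq // => i j /addIr [] //.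
Qed.

Lemma zwin_sub (M N : nat) : (M <= N)%N -> {subset zwin M <= zwin N}.
Proof. move=> h m; rewrite !mem_zwin; lia. Qed.

Lemma sum_window (R : realType) (F : int -> CC R) (W : seq int) (N : nat) :
  uniq W -> (forall m, m \notin W -> F m = 0) -> {subset W <= zwin N} ->
  \sum_(m <- zwin N) F m = \sum_(m <- W) F m.
Proof.
move=> uW hF sW.
rewrite (bigID (mem W)) /= [X in _ + X]big1 ?addr0; last by move=> m /hF.
rewrite -big_filter; apply: perm_big; apply: uniq_perm.
- by rewrite filter_uniq // zwin_uniq.
- exact: uW.
by move=> m; rewrite mem_filter; apply/andP/idP => [[]//|h]; split => //; apply: sW.
Qed.

Lemma lim_sum (R : realType) (F : int -> CC R) (M : nat) :
  (forall m, m \notin zwin M -> F m = 0) ->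
  limn (fun N : nat => \sum_(m <- zwin N) F m) = \sum_(m <- zwin M) F m.
Proof.
move=> hF; apply: (lim_near_cst (@norm_hausdorff _ _)).
near=> N.
apply: (@sum_window R F (zwin M) N) => //; first exact: zwin_uniq.
apply: zwin_sub; near: N; exact: nbhs_infty_ge.
Unshelve. all: by end_near.
Qed.

Definition Band {R : realType} (B : nat) (T : op R) :=
  forall k l, (k - l) \notin zwin B -> T k l = 0.

Lemma opmul_single (R : realType) (S T : op R) (k l m0 : int) :
  (forall m, m != m0 -> S k m * T m l = 0) -> opmul S T k l = S k m0 * T m0 l.
Proof.
move=> h; rewrite /opmul (@lim_sum R _ (absz m0)); last first.
  move=> m hm; apply: h; apply: contraNneq hm => ->; rewrite mem_zwin; lia.
rewrite (@sum_window R _ [:: m0]) ?big_seq1 //.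
- by move=> m; rewrite inE => /h.
- by move=> m; rewrite inE => /eqP ->; rewrite mem_zwin; lia.
Qed.

Lemma opmul_band (R : realType) (B : nat) (S T : op R) (k l : int) : Band B S ->
  opmul S T k l = \sum_(j <- zwin B) S k (k - j) * T (k - j) l.
Proof.
move=> hS; rewrite /opmul (@lim_sum R _ (B + absz k)); last first.
  move=> m hm; rewrite hS ?mul0r //; apply: contra hm; rewrite !mem_zwin; lia.
rewrite (@sum_window R _ [seq k - j | j <- zwin B]) ?big_map //.
- by rewrite map_inj_uniq ?zwin_uniq // => i j /addrI /oppr_inj.
- move=> m hm; rewrite hS ?mul0r //; apply: contra hm => h.
  by apply/mapP; exists (k - m) => //; rewrite opprB addrC subrK.
- by move=> m /mapP [j hj ->]; move: hj; rewrite !mem_zwin; lia.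
Qed.

Lemma opmul_sum (R : realType) (S T : op R) (k l : int) (M : nat) :
  (forall m, m \notin zwin M -> S k m * T m l = 0) ->
  opmul S T k l = \sum_(m <- zwin M) S k m * T m l.
Proof. by move=> h; rewrite /opmul (@lim_sum R _ M). Qed.

Lemma opmul_diagl (R : realType) (u : int -> CC R) (X : op R) k l :
  opmul (fun k l => (k == l)%:R * u l) X k l = u k * X k l.
Proof.
rewrite (@opmul_single R _ _ _ _ k) ?eqxx ?mul1r // => m hm.
by rewrite eq_sym (negbTE hm) !mul0r.
Qed.

Lemma opmul_diagr (R : realType) (u : int -> CC R) (X : op R) k l :
  opmul X (fun k l => (k == l)%:R * u l) k l = X k l * u l.
Proof.
rewrite (@opmul_single R _ _ _ _ l) ?eqxx ?mul1r // => m hm.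
by rewrite (negbTE hm) mul0r mulr0.
Qed.

Lemma opmul_V (R : realType) (X : op R) k l : opmul (Vop R) X k l = X (k - 1) l.
Proof.
rewrite (@opmul_single R _ _ _ _ (k - 1)) /Vop ?subrK ?eqxx ?mul1r // => m hm.
have -> : (k == m + 1) = false by apply/negbTE; apply: contra hm => /eqP ->; rewrite addrK.
by rewrite mul0r.
Qed.

Lemma opmul_Vinv (R : realType) (X : op R) k l : opmul (Vinvop R) X k l = X (k + 1) l.
Proof.
rewrite (@opmul_single R _ _ _ _ (k + 1)) /Vinvop ?eqxx ?mul1r // => m hm.
by rewrite eq_sym (negbTE hm) mul0r.
Qed.

Lemma opmul0l (R : realType) (X : op R) : opmul (op0 R) X = op0 R.
Proof.
apply: funext => k; apply: funext => l.
by rewrite (@opmul_single R _ _ _ _ 0) /op0 ?mul0r // => m _; rewrite mul0r.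
Qed.

Lemma opadj_mul (R : realType) (B : nat) (a b : op R) : Band B a ->
  opadj (opmul a b) = opmul (opadj b) (opadj a).
Proof.
move=> ha; apply: funext => k; apply: funext => l; rewrite /opadj.
have hM : forall m, m \notin zwin (B + absz l) -> a l m = 0.
  by move=> m hm; apply: ha; apply: contra hm; rewrite !mem_zwin; lia.
rewrite (@opmul_sum R _ _ _ _ (B + absz l)); last by move=> m /hM ->; rewrite mul0r.
rewrite (@opmul_sum R _ _ _ _ (B + absz l)); last by move=> m /hM ->; rewrite conjc0 mulr0.
rewrite rmorph_sum; apply: eq_bigr => m _; by rewrite rmorphM mulrC.
Qed.

Section Chars.
Variable R : realType.
Variable G : topologicalZmodType.

Lemma char1 : is_char (fun _ : G => (1 : CC R)).
Proof. split; [exact: cst_continuous | by move=> *; rewrite mulr1 | by move=> _; rewrite normr1]. Qed.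

Lemma charM (chi psi : G -> CC R) : is_char chi -> is_char psi ->
  is_char (fun x => chi x * psi x).
Proof.
case=> c1 m1 n1 [c2 m2 n2]; split.
- by move=> x; apply: continuousM; [exact: c1|exact: c2].
- by move=> x y; rewrite m1 m2 mulrACA.
- by move=> x; rewrite normrM n1 n2 mulr1.
Qed.

Lemma conj_inv (z : CC R) : `|z| = 1 -> (z^*)%C = z^-1.
Proof. by move=> h; rewrite (invc_norm z) -/(CC R) h expr1n invr1 mul1r. Qed.

Lemma charJ (chi : G -> CC R) : is_char chi -> is_char (fun x => (chi x)^*%C).
Proof.
case=> c1 m1 n1.
have E : (fun x => (chi x)^*%C) = (fun x => (chi x)^-1).
  by apply: funext => x; rewrite conj_inv.
split.
- rewrite E => x; apply: continuousV; last exact: c1.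
  by rewrite -normr_eq0 n1 oner_eq0.
- by move=> x y; rewrite m1 rmorphM.
- by move=> x; rewrite normcJ n1.
Qed.

Lemma Fspan0 : Fspan (fun _ : G => (0 : CC R)).
Proof. by exists [::]; split => //; apply: funext => x; rewrite big_nil. Qed.

Lemma Fspan_char (chi : G -> CC R) : is_char chi -> Fspan chi.
Proof.
move=> h; exists [:: (1, chi)]; split.
  by move=> p; rewrite inE => /eqP ->.
by apply: funext => x; rewrite big_seq1 mul1r.
Qed.

Lemma FspanD (f g : G -> CC R) : Fspan f -> Fspan g -> Fspan (fun x => f x + g x).
Proof.
move=> [s [hs ->]] [t [ht ->]]; exists (s ++ t); split.
  by move=> p; rewrite mem_cat => /orP [/hs|/ht].
by apply: funext => x; rewrite big_cat.
Qed.

Lemma FspanZ (c : CC R) (f : G -> CC R) : Fspan f -> Fspan (fun x => c * f x).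
Proof.
move=> [s [hs ->]]; exists [seq (c * p.1, p.2) | p <- s]; split.
  by move=> p /mapP [q /hs hq ->].
apply: funext => x; rewrite big_map mulr_sumr; apply: eq_bigr => p _ /=.
by rewrite mulrA.
Qed.

Lemma Fspan_cst (c : CC R) : Fspan (fun _ : G => c).
Proof.
have := @FspanZ c _ (@Fspan_char _ char1).
by under eq_fun do rewrite mulr1.
Qed.

Lemma FspanM (f g : G -> CC R) : Fspan f -> Fspan g -> Fspan (fun x => f x * g x).
Proof.
move=> [s [hs ->]] [t [ht ->]].
exists [seq (p.1 * q.1, fun x => p.2 x * q.2 x) | p <- s, q <- t]; split.
  move=> r /allpairsP [[p q] [/= /hs hp /ht hq ->]] /=; exact: charM.
apply: funext => x; rewrite big_allpairs_dep mulr_suml; apply: eq_bigr => p _.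
rewrite mulr_sumr; apply: eq_bigr => q _ /=.
by rewrite mulrACA.
Qed.

Lemma FspanJ (f : G -> CC R) : Fspan f -> Fspan (fun x => (f x)^*%C).
Proof.
move=> [s [hs ->]]; exists [seq ((p.1)^*%C, fun x => (p.2 x)^*%C) | p <- s]; split.
  by move=> p /mapP [q /hs hq ->] /=; apply: charJ.
apply: funext => x; rewrite big_map rmorph_sum; apply: eq_bigr => p _ /=.
by rewrite rmorphM.
Qed.

Lemma Fspan_shift (f : G -> CC R) (a : G) : Fspan f -> Fspan (fun x => f (x + a)).
Proof.
move=> [s [hs ->]]; exists [seq (p.1 * p.2 a, p.2) | p <- s]; split.
  by move=> p /mapP [q /hs hq ->].
apply: funext => x; rewrite big_map; apply: eq_big_seq => p /hs [_ m _] /=.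
by rewrite m mulrA mulrAC.
Qed.

Lemma Fspan_sum (I : eqType) (r : seq I) (F : I -> G -> CC R) :
  (forall i, i \in r -> Fspan (F i)) -> Fspan (fun x => \sum_(i <- r) F i x).
Proof.
elim: r => [|i r IH] h.
  by under eq_fun do rewrite big_nil; exact: Fspan0.
under eq_fun do rewrite big_cons.
apply: FspanD; first by apply: h; rewrite mem_head.
by apply: IH => j hj; apply: h; rewrite in_cons hj orbT.
Qed.

Lemma Fspan_cont (f : G -> CC R) : Fspan f -> continuous f.
Proof.
move=> [s [hs ->]]; elim: s hs => [|p s IH] hs.
  by under eq_fun do rewrite big_nil; exact: cst_continuous.
under eq_fun do rewrite big_cons.
move=> x; apply: cvgD.
  apply: cvgM; first exact: cvg_cst.
  by have [c _ _] := hs p (mem_head _ _); exact: c.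
by apply: IH => q hq; apply: hs; rewrite in_cons hq orbT.
Qed.
Variable x1 : G.
Hypothesis x1_dense : closure (range (fun n : int => x1 *~ n)) = [set: G].

Lemma dense_zero (h : G -> CC R) : continuous h ->
  (forall k : int, h (x1 *~ k) = 0) -> forall x, h x = 0.
Proof.
move=> hc h0 x; apply/eqP/negPn/negP => hx.
have : closure (range (fun n : int => x1 *~ n)) x by rewrite x1_dense.
move=> /(_ [set y | `|h x - h y| < `|h x|]) [].
  have := @cvgr_dist_lt _ _ _ (nbhs x) _ h (h x) (hc x) `|h x|.
  by rewrite normr_gt0 => /(_ _ hx).
move=> y [[n _ <-]] /=; rewrite h0 subr0 ltxx.
done.
Qed.

Definition Fs (u : int -> CC R) :=
  exists f : G -> CC R, Fspan f /\ forall k, u k = f (x1 *~ k).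

Lemma Fspan_uniq (f g : G -> CC R) : Fspan f -> Fspan g ->
  (forall k : int, f (x1 *~ k) = g (x1 *~ k)) -> f = g.
Proof.
move=> hf hg e; apply: funext => x; apply/eqP; rewrite -subr_eq0; apply/eqP.
apply: (@dense_zero (fun y => f y - g y)) => [y|k].
  by apply: cvgB; [exact: Fspan_cont hf y | exact: Fspan_cont hg y].
by rewrite e subrr.
Qed.

Variable d : (G -> CC R) -> (G -> CC R).
Hypothesis d_der : is_F_derivation d.
Hypothesis d_rot : forall f, Fspan f -> d f \o phiG x1 = d (f \o phiG x1).

Lemma dcont f : Fspan f -> continuous (d f).
Proof. by case: d_der => h _ _; apply: h. Qed.

Lemma dlin (c : CC R) {f g : G -> CC R} : Fspan f -> Fspan g ->
  d (fun x => c * f x + g x) = (fun x => c * d f x + d g x).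
Proof. by case: d_der => _ h _; apply: h. Qed.

Lemma dM {f g : G -> CC R} : Fspan f -> Fspan g ->
  d (fun x => f x * g x) = (fun x => d f x * g x + f x * d g x).
Proof. by case: d_der => _ _ h; apply: h. Qed.

Lemma d0 : d (fun _ => 0) = (fun _ => 0).
Proof.
have := dlin 1 Fspan0 Fspan0.
under eq_fun do rewrite mul1r addr0.
move=> e; apply: funext => x; have := congr1 (fun F => F x) e => /= /eqP.
by rewrite mul1r -subr_eq subrr eq_sym => /eqP.
Qed.

Lemma dD {f g : G -> CC R} : Fspan f -> Fspan g -> d (fun x => f x + g x) = (fun x => d f x + d g x).
Proof.
move=> hf hg; have := dlin 1 hf hg.
by under eq_fun do rewrite mul1r; under [X in _ = X -> _]eq_fun do rewrite mul1r.
Qed.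

Lemma dZ (c : CC R) {f : G -> CC R} : Fspan f -> d (fun x => c * f x) = (fun x => c * d f x).
Proof.
move=> hf; have := dlin c hf Fspan0.
by under eq_fun do rewrite addr0; rewrite d0; under [X in _ = X -> _]eq_fun do rewrite addr0.
Qed.

Lemma dsum (I : eqType) (r : seq I) (F : I -> G -> CC R) :
  (forall i, i \in r -> Fspan (F i)) ->
  d (fun x => \sum_(i <- r) F i x) = (fun x => \sum_(i <- r) d (F i) x).
Proof.
elim: r => [|i r IH] h.
  by under eq_fun do rewrite big_nil; rewrite d0; under [RHS]eq_fun do rewrite big_nil.
under eq_fun do rewrite big_cons.
rewrite dD; first last.
- by apply: Fspan_sum => j hj; apply: h; rewrite in_cons hj orbT.
- by apply: h; rewrite mem_head.
rewrite IH; last by move=> j hj; apply: h; rewrite in_cons hj orbT.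
by apply: funext => x; rewrite big_cons.
Qed.

Lemma dcst (c : CC R) : d (fun _ => c) = (fun _ => 0).
Proof.
have h1 : d (fun _ => 1) = (fun _ => 0).
  have := dM (Fspan_cst 1) (Fspan_cst 1).
  under eq_fun do rewrite mulr1.
  move=> e; apply: funext => x; have := congr1 (fun F => F x) e => /= /eqP.
  by rewrite mulr1 mul1r -subr_eq subrr eq_sym => /eqP.
have := dZ c (Fspan_cst 1); under eq_fun do rewrite mulr1.
by rewrite h1; under [X in _ = X -> _]eq_fun do rewrite mulr0.
Qed.

Lemma d_rot' {f : G -> CC R} : Fspan f -> d (fun x => f (x + x1)) = (fun x => d f (x + x1)).
Proof. by move=> hf; have := d_rot _ hf; rewrite /comp /phiG => ->. Qed.

Lemma d_shift_pos (n : nat) f : Fspan f ->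
  d (fun x => f (x + x1 *~ n%:Z)) = (fun x => d f (x + x1 *~ n%:Z)).
Proof.
elim: n f => [|n IH] f hf.
  by rewrite mulr0z; under eq_fun do rewrite addr0; under [RHS]eq_fun do rewrite addr0.
have hg : Fspan (fun y => f (y + x1 *~ n%:Z)) by apply: Fspan_shift.
have E : forall y : G, y + x1 *~ (n.+1)%:Z = (y + x1) + x1 *~ n%:Z.
  by move=> y; rewrite intS mulrzDr mulr1z addrA.
under eq_fun do rewrite E.
rewrite (d_rot' hg) IH //.
by apply: funext => y; rewrite E.
Qed.

Lemma d_shift_neg (n : nat) f : Fspan f ->
  d (fun x => f (x - x1 *~ n%:Z)) = (fun x => d f (x - x1 *~ n%:Z)).
Proof.
elim: n f => [|n IH] f hf.
  by rewrite mulr0z; under eq_fun do rewrite subr0; under [RHS]eq_fun do rewrite subr0.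
have hg : Fspan (fun y => f (y - x1 *~ (n.+1)%:Z)) by apply: Fspan_shift.
have E : forall y : G, y + x1 - x1 *~ (n.+1)%:Z = y - x1 *~ n%:Z.
  by move=> y; rewrite intS mulrzDr mulr1z opprD addrA addrK.
have e := d_rot' hg.
have F : (fun x => (fun y => f (y - x1 *~ (n.+1)%:Z)) (x + x1)) = (fun x => f (x - x1 *~ n%:Z)).
  by apply: funext => x /=; congr f; rewrite intS mulrzDr mulr1z opprD addrA addrK.
rewrite F IH // in e.
apply: funext => y; have := congr1 (fun F => F (y - x1)) e => /=.
by rewrite subrK => <-; congr (d f); rewrite intS mulrzDr mulr1z opprD addrA.
Qed.

Lemma d_shift (j : int) f : Fspan f ->
  d (fun x => f (x + x1 *~ j)) = (fun x => d f (x + x1 *~ j)).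
Proof.
case: j => n hf; first exact: d_shift_pos.
rewrite NegzE mulrNz; exact: d_shift_neg.
Qed.

Definition PP (T : op R) := exists B : nat, Band B T /\
  exists F : int -> G -> CC R, (forall n, Fspan (F n)) /\
    (forall k l, T k l = F (k - l) (x1 *~ k)).

Lemma PP_add a b : PP a -> PP b -> PP (opadd a b).
Proof.
move=> [B1 [h1 [Fa [sa ea]]]] [B2 [h2 [Fb [sb eb]]]].
exists (maxn B1 B2); split.
  move=> k l hk; rewrite /opadd h1 ?h2 ?addr0 //; apply: contra hk; apply: zwin_sub; lia.
exists (fun n x => Fa n x + Fb n x); split; first by move=> n; apply: FspanD.
by move=> k l; rewrite /opadd ea eb.
Qed.

Lemma PP_scale c a : PP a -> PP (opscale c a).
Proof.
move=> [B1 [h1 [Fa [sa ea]]]]; exists B1; split.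
  by move=> k l hk; rewrite /opscale h1 ?mulr0.
exists (fun n x => c * Fa n x); split; first by move=> n; apply: FspanZ.
by move=> k l; rewrite /opscale ea.
Qed.

Lemma PP_adj a : PP a -> PP (opadj a).
Proof.
move=> [B1 [h1 [Fa [sa ea]]]]; exists B1; split.
  move=> k l hk; rewrite /opadj h1 ?conjc0 //; apply: contra hk; rewrite !mem_zwin; lia.
exists (fun n x => (Fa (- n) (x + x1 *~ (- n)))^*%C); split.
  by move=> n; apply: FspanJ; apply: Fspan_shift.
move=> k l; rewrite /opadj ea opprB -mulrzDr; congr ((Fa _ (x1 *~ _))^*%C).
by rewrite addrC subrK.
Qed.

Lemma PP_mul a b : PP a -> PP b -> PP (opmul a b).
Proof.
move=> [B1 [h1 [Fa [sa ea]]]] [B2 [h2 [Fb [sb eb]]]].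
exists (B1 + B2)%N; split.
  move=> k l hk; rewrite (opmul_band _ _ _ _ _ _ h1) big1_seq // => j /andP [_ hj].
  rewrite h2 ?mulr0 //; apply: contra hk; move: hj; rewrite !mem_zwin; lia.
exists (fun n x => \sum_(j <- zwin B1) Fa j x * Fb (n - j) (x + x1 *~ (- j))); split.
  move=> n; apply: Fspan_sum => j _; apply: FspanM => //; exact: Fspan_shift.
move=> k l; rewrite (opmul_band _ _ _ _ _ _ h1); apply: eq_bigr => j _.
rewrite ea eb -mulrzDr; congr (Fa _ _ * Fb _ _).
- by rewrite opprB addrC subrK.
- by rewrite addrAC.
Qed.

Lemma PP_V : PP (Vop R).
Proof.
exists 1%N; split.
  move=> k l hk; rewrite /Vop; have -> : (k == l + 1) = false; last by [].
  apply/negbTE; apply: contra hk => /eqP ->; rewrite mem_zwin; lia.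
exists (fun n _ => (n == 1)%:R); split; first by move=> n; apply: Fspan_cst.
move=> k l; rewrite /Vop; congr (_ %:R); apply/eqP/eqP; lia.
Qed.

Lemma PP_Vinv : PP (Vinvop R).
Proof.
exists 1%N; split.
  move=> k l hk; rewrite /Vinvop; have -> : (k + 1 == l) = false; last by [].
  apply/negbTE; apply: contra hk => /eqP <-; rewrite mem_zwin; lia.
exists (fun n _ => (n == -1)%:R); split; first by move=> n; apply: Fspan_cst.
move=> k l; rewrite /Vinvop; congr (_ %:R); apply/eqP/eqP; lia.
Qed.

Lemma PP_M f : Fspan f -> PP (Mop x1 f).
Proof.
move=> hf; exists 0%N; split.
  move=> k l hk; rewrite /Mop; have -> : (k == l) = false; last by rewrite mul0r.
  apply/negbTE; apply: contra hk => /eqP ->; rewrite mem_zwin; lia.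
exists (fun n x => (n == 0)%:R * f x); split; first by move=> n; apply: FspanZ.
move=> k l; rewrite /Mop subr_eq0; case: eqP => [->|] //; by rewrite !mul0r.
Qed.

Lemma Bcal_PP b : Bcal x1 b -> PP b.
Proof.
apply; [split| exact: PP_V | exact: PP_Vinv | move=> chi hc; apply: PP_M; exact: Fspan_char].
- exact: PP_add.
- exact: PP_scale.
- exact: PP_mul.
- exact: PP_adj.
Qed.

Definition Dz (u : int -> CC R) (k : int) : CC R :=
  match pselect (Fs u) with
  | left h => d (proj1_sig (cid h)) (x1 *~ k)
  | right _ => 0
  end.

Definition delta (T : op R) : op R := fun k l => Dz (fun m => T m (m - (k - l))) k.

Lemma deltaE {T : op R} {F : int -> G -> CC R} :
  (forall n, Fspan (F n)) -> (forall k l, T k l = F (k - l) (x1 *~ k)) ->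
  forall k l, delta T k l = d (F (k - l)) (x1 *~ k).
Proof.
move=> sF eT k l; rewrite /delta /Dz.
have em : forall m, T m (m - (k - l)) = F (k - l) (x1 *~ m).
  by move=> m; rewrite eT; congr (F _ _); lia.
case: pselect => [h|nh].
  case: (cid h) => g [hg eg] /=.
  suff -> : g = F (k - l) by [].
  by apply: Fspan_uniq => // m; rewrite -eg em.
by exfalso; apply: nh; exists (F (k - l)); split.
Qed.

Lemma PP_delta_band (B : nat) T : Band B T -> PP T -> Band B (delta T).
Proof.
move=> hB [_ [_ [F [sF eT]]]] k l hk; rewrite (deltaE sF eT).
have -> : F (k - l) = fun _ => 0; last by rewrite d0.
apply: Fspan_uniq => // [|m]; first exact: Fspan0.
have E : forall a b : int, a - (a - b) = b by move=> a b; lia.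
by have := eT m (m - (k - l)); rewrite E => <-; rewrite hB // E.
Qed.

Lemma delta_lin (c : CC R) a b : PP a -> PP b ->
  delta (opadd (opscale c a) b) = opadd (opscale c (delta a)) (delta b).
Proof.
move=> [B1 [h1 [Fa [sa ea]]]] [B2 [h2 [Fb [sb eb]]]].
have sH : forall n, Fspan (fun x => c * Fa n x + Fb n x) by move=> n; apply: FspanD => //; apply: FspanZ.
have eH : forall k l, opadd (opscale c a) b k l = (fun x => c * Fa (k - l) x + Fb (k - l) x) (x1 *~ k).
  by move=> k l; rewrite /opadd /opscale ea eb.
apply: funext => k; apply: funext => l.
rewrite (deltaE sH eH) /opadd /opscale (deltaE sa ea) (deltaE sb eb) dlin //.
Qed.

Lemma mul_spec (B1 : nat) (a b : op R) (Fa Fb : int -> G -> CC R) : Band B1 a ->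
  (forall k l, a k l = Fa (k - l) (x1 *~ k)) ->
  (forall k l, b k l = Fb (k - l) (x1 *~ k)) ->
  forall k l, opmul a b k l =
   (fun x => \sum_(j <- zwin B1) Fa j x * Fb (k - l - j) (x + x1 *~ (- j))) (x1 *~ k).
Proof.
move=> h1 ea eb k l; rewrite (opmul_band _ _ _ _ _ _ h1); apply: eq_bigr => j _.
rewrite ea eb -mulrzDr; congr (Fa _ _ * Fb _ _).
- by rewrite opprB addrC subrK.
- by rewrite addrAC.
Qed.

Lemma delta_mul a b : PP a -> PP b ->
  delta (opmul a b) = opadd (opmul (delta a) b) (opmul a (delta b)).
Proof.
move=> pa pb; have pa' := pa; have pb' := pb.
move: pa pb => [B1 [h1 [Fa [sa ea]]]] [B2 [h2 [Fb [sb eb]]]].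
pose H n x := \sum_(j <- zwin B1) Fa j x * Fb (n - j) (x + x1 *~ (- j)).
have sH : forall n, Fspan (H n).
  move=> n; apply: Fspan_sum => j _; apply: FspanM => //; exact: Fspan_shift.
have eH : forall k l, opmul a b k l = H (k - l) (x1 *~ k) := mul_spec _ _ _ _ _ h1 ea eb.
apply: funext => k; apply: funext => l.
rewrite (deltaE sH eH) /opadd.
rewrite (opmul_band _ _ _ _ _ _ (@PP_delta_band _ _ h1 pa')).
rewrite (opmul_band _ _ _ _ _ _ h1) -big_split /= /H.
rewrite dsum; last first.
  move=> j _; apply: FspanM => //; exact: Fspan_shift.
apply: eq_bigr => j _.
rewrite dM //; last exact: Fspan_shift.
rewrite d_shift // (deltaE sa ea) (deltaE sb eb) ea -mulrzDr.
have -> : k - (k - j) = j by lia.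
have -> : k - j - l = k - l - j by lia.
by rewrite eb; have -> : k - j - l = k - l - j by lia.
Qed.

Lemma delta_M f : Fspan f -> delta (Mop x1 f) = Mop x1 (d f).
Proof.
move=> hf.
have sF : forall n : int, Fspan (fun x => (n == 0)%:R * f x) by move=> n; apply: FspanZ.
have eT : forall k l, Mop x1 f k l = (fun x => (k - l == 0)%:R * f x) (x1 *~ k).
  by move=> k l; rewrite /Mop /= subr_eq0; case: eqP => [->|]; rewrite ?mul0r.
apply: funext => k; apply: funext => l.
rewrite (deltaE sF eT) dZ // /Mop subr_eq0; case: eqP => [->|]; rewrite ?mul0r //.
Qed.

Lemma delta_cst (T : op R) (c : int -> CC R) : (forall k l, T k l = c (k - l)) ->
  delta T = op0 R.
Proof.
move=> h.
have sF : forall n : int, Fspan (fun _ : G => c n) by move=> n; apply: Fspan_cst.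
have eT : forall k l, T k l = (fun _ : G => c (k - l)) (x1 *~ k) by [].
apply: funext => k; apply: funext => l.
by rewrite (deltaE sF eT) dcst.
Qed.

Lemma delta_V : delta (Vop R) = op0 R.
Proof.
apply: (@delta_cst _ (fun n => (n == 1)%:R)) => k l; rewrite /Vop.
by congr (_ %:R); apply/eqP/eqP; lia.
Qed.

Lemma delta_Vinv : delta (Vinvop R) = op0 R.
Proof.
apply: (@delta_cst _ (fun n => (n == -1)%:R)) => k l; rewrite /Vinvop.
by congr (_ %:R); apply/eqP/eqP; lia.
Qed.

Lemma Bset_add (a b : op R) : Bset x1 a -> Bset x1 b -> Bset x1 (opadd a b).
Proof. by move=> ha hb S hS hn hV hM; case: (hS) => ca _ _ _; apply: ca; [exact: ha|exact: hb]. Qed.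
Lemma Bset_scale (c : CC R) (a : op R) : Bset x1 a -> Bset x1 (opscale c a).
Proof. by move=> ha S hS hn hV hM; case: (hS) => _ cs _ _; apply: cs; exact: ha. Qed.
Lemma Bset_mul (a b : op R) : Bset x1 a -> Bset x1 b -> Bset x1 (opmul a b).
Proof. by move=> ha hb S hS hn hV hM; case: (hS) => _ _ cm _; apply: cm; [exact: ha|exact: hb]. Qed.
Lemma Bset_adj (a : op R) : Bset x1 a -> Bset x1 (opadj a).
Proof. by move=> ha S hS hn hV hM; case: (hS) => _ _ _ cj; apply: cj; exact: ha. Qed.
Lemma Bset_V : Bset x1 (Vop R).
Proof. by move=> S _ _ hV _. Qed.
Lemma Bset_M (g : G -> CC R) : continuous g -> Bset x1 (Mop x1 g).
Proof. by move=> hg S _ _ _ hM; apply: hM. Qed.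

Lemma Vinv_adj : Vinvop R = opadj (Vop R).
Proof.
apply: funext => k; apply: funext => l; rewrite /opadj /Vop /Vinvop conjc_nat.
by rewrite eq_sym.
Qed.

Lemma Bset_Vinv : Bset x1 (Vinvop R).
Proof. by rewrite Vinv_adj; apply: Bset_adj; exact: Bset_V. Qed.

Lemma Bset_op0 : Bset x1 (op0 R).
Proof.
have -> : op0 R = opscale 0 (Vop R).
  by apply: funext => k; apply: funext => l; rewrite /opscale mul0r.
by apply: Bset_scale; exact: Bset_V.
Qed.

Lemma Bset_sum (I : eqType) (r : seq I) (F : I -> op R) :
  (forall i, i \in r -> Bset x1 (F i)) ->
  Bset x1 (fun k l => \sum_(i <- r) F i k l).
Proof.
elim: r => [|i r IH] h.
  have -> : (fun k l => \sum_(i <- [::]) F i k l) = op0 R.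
    by apply: funext => k; apply: funext => l; rewrite big_nil.
  exact: Bset_op0.
have -> : (fun k l => \sum_(j <- i :: r) F j k l) =
          opadd (F i) (fun k l => \sum_(j <- r) F j k l).
  by apply: funext => k; apply: funext => l; rewrite big_cons.
apply: Bset_add; first by apply: h; rewrite mem_head.
by apply: IH => j hj; apply: h; rewrite in_cons hj orbT.
Qed.

Definition Wn (n : int) : op R := fun k l => (k - l == n)%:R.

Lemma Bset_Wn n : Bset x1 (Wn n).
Proof.
have W0 : Wn 0 = opmul (Vop R) (Vinvop R).
  apply: funext => k; apply: funext => l; rewrite opmul_V /Wn /Vinvop.
  by congr (_ %:R); apply/eqP/eqP; lia.
have WS : forall n, Wn (n + 1) = opmul (Vop R) (Wn n).
  move=> m; apply: funext => k; apply: funext => l; rewrite opmul_V /Wn.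
  by congr (_ %:R); apply/eqP/eqP; lia.
have WP : forall n, Wn (n - 1) = opmul (Vinvop R) (Wn n).
  move=> m; apply: funext => k; apply: funext => l; rewrite opmul_Vinv /Wn.
  by congr (_ %:R); apply/eqP/eqP; lia.
have : forall m : nat, Bset x1 (Wn m%:Z) /\ Bset x1 (Wn (- m%:Z)).
  elim=> [|m [IH1 IH2]].
    by rewrite oppr0 W0; split; apply: Bset_mul; [exact: Bset_V|exact: Bset_Vinv|exact: Bset_V|exact: Bset_Vinv].
  split.
    by rewrite intS addrC WS; apply: Bset_mul => //; exact: Bset_V.
  by rewrite intS opprD addrC WP; apply: Bset_mul => //; exact: Bset_Vinv.
move=> h; case: n => m; first exact: (h m).1.
by rewrite NegzE; exact: (h m.+1).2.
Qed.

Lemma Bset_delta b : PP b -> Bset x1 (delta b).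
Proof.
move=> pb; have pb' := pb; move: pb => [B [hB [F [sF eT]]]].
have hd := @PP_delta_band _ _ hB pb'.
have -> : delta b = fun k l => \sum_(n <- zwin B) opmul (Mop x1 (d (F n))) (Wn n) k l.
  apply: funext => k; apply: funext => l.
  have E : forall n, opmul (Mop x1 (d (F n))) (Wn n) k l = d (F n) (x1 *~ k) * (k - l == n)%:R.
    by move=> n; rewrite (@opmul_diagl R (fun l => d (F n) (x1 *~ l))).
  under eq_bigr do rewrite E.
  have [hin|hout] := boolP (k - l \in zwin B).
    rewrite (@sum_window R _ [:: k - l]) ?big_seq1 //.
    - by rewrite eqxx mulr1 (deltaE sF eT).
    - by move=> n; rewrite inE eq_sym => /negbTE ->; rewrite mulr0.
    - by move=> n; rewrite inE => /eqP ->.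
  rewrite hd // big1_seq // => n /andP [_ hn].
  have -> : (k - l == n) = false by apply/negbTE; apply: contra hout => /eqP ->.
  by rewrite mulr0.
apply: Bset_sum => n _; apply: Bset_mul; last exact: Bset_Wn.
apply: Bset_M; exact: dcont.
Qed.

Lemma expiD (a b : R) : expi a * expi b = expi (a + b).
Proof.
rewrite /expi cosD sinD [LHS]/GRing.mul /=; congr (_ +i* _)%C; exact: addrC.
Qed.

Lemma expi0 : expi (0 : R) = 1.
Proof. by rewrite /expi cos0 sin0. Qed.

Lemma expi3 (a b c : R) (D : CC R) : a + b + c = 0 ->
  expi a * (expi b * D) * expi c = D.
Proof.
move=> h; rewrite mulrA mulrAC expiD expiD h expi0 mul1r //.
Qed.

Lemma delta_inv (th : R) b : PP b ->
  opmul (opmul (Uop (- th)) (delta (opmul (opmul (Uop th) b) (Uop (- th))))) (Uop th)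
  = delta b.
Proof.
move=> [B [hB [F [sF eT]]]].
pose b' := opmul (opmul (Uop th) b) (Uop (- th)).
have eb' : forall k l, b' k l = (fun x => expi (th * (k - l)%:~R) * F (k - l) x) (x1 *~ k).
  move=> k l; rewrite /b' /Uop.
  rewrite (@opmul_diagr R (fun l => expi (- th * l%:~R))).
  rewrite (@opmul_diagl R (fun l => expi (th * l%:~R))) eT /=.
  rewrite mulrAC expiD intrB mulrBr mulNr //.
have sF' : forall n, Fspan (fun x => expi (th * n%:~R) * F n x) by move=> n; apply: FspanZ.
apply: funext => k; apply: funext => l; rewrite /Uop.
rewrite (@opmul_diagr R (fun l => expi (th * l%:~R))).
rewrite (@opmul_diagl R (fun l => expi (- th * l%:~R))).
rewrite (deltaE sF' eb') dZ // (deltaE sF eT) /=.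
apply: expi3; rewrite intrB mulrBr mulNr addrA addNr add0r addNr //.
Qed.

Lemma Bcal_add {a b : op R} : Bcal x1 a -> Bcal x1 b -> Bcal x1 (opadd a b).
Proof. by move=> ha hb S hS hV hVi hM; case: (hS) => ca _ _ _; apply: ca; [exact: ha|exact: hb]. Qed.
Lemma Bcal_scale (c : CC R) {a : op R} : Bcal x1 a -> Bcal x1 (opscale c a).
Proof. by move=> ha S hS hV hVi hM; case: (hS) => _ cs _ _; apply: cs; exact: ha. Qed.
Lemma Bcal_mul {a b : op R} : Bcal x1 a -> Bcal x1 b -> Bcal x1 (opmul a b).
Proof. by move=> ha hb S hS hV hVi hM; case: (hS) => _ _ cm _; apply: cm; [exact: ha|exact: hb]. Qed.
Lemma Bcal_adj {a : op R} : Bcal x1 a -> Bcal x1 (opadj a).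
Proof. by move=> ha S hS hV hVi hM; case: (hS) => _ _ _ cj; apply: cj; exact: ha. Qed.
Lemma Bcal_V : Bcal x1 (Vop R).
Proof. by move=> S _ hV _ _. Qed.
Lemma Bcal_Vinv : Bcal x1 (Vinvop R).
Proof. by move=> S _ _ hV _. Qed.
Lemma Bcal_op0 : Bcal x1 (op0 R).
Proof.
have -> : op0 R = opscale 0 (Vop R).
  by apply: funext => k; apply: funext => l; rewrite /opscale mul0r.
by apply: Bcal_scale; exact: Bcal_V.
Qed.

Section Der.
Variable dl : op R -> op R.
Hypothesis dl_der : is_B_derivation x1 dl.

Lemma dl_lin (c : CC R) {a b : op R} : Bcal x1 a -> Bcal x1 b ->
  dl (opadd (opscale c a) b) = opadd (opscale c (dl a)) (dl b).
Proof. by case: dl_der => _ h _; apply: h. Qed.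

Lemma dl_mul {a b : op R} : Bcal x1 a -> Bcal x1 b ->
  dl (opmul a b) = opadd (opmul (dl a) b) (opmul a (dl b)).
Proof. by case: dl_der => _ _ h; apply: h. Qed.

Lemma opscale1 (a : op R) : opscale 1 a = a.
Proof. by apply: funext => k; apply: funext => l; rewrite /opscale mul1r. Qed.

Lemma opadd0 (a : op R) : opadd a (op0 R) = a.
Proof. by apply: funext => k; apply: funext => l; rewrite /opadd /op0 addr0. Qed.

Lemma dl_add {a b : op R} : Bcal x1 a -> Bcal x1 b -> dl (opadd a b) = opadd (dl a) (dl b).
Proof. by move=> ha hb; have := dl_lin 1 ha hb; rewrite !opscale1. Qed.

Lemma op_double (X : op R) : X = opadd X X -> X = op0 R.
Proof.
move=> h; apply: funext => k; apply: funext => l.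
have := congr1 (fun Y => Y k l) h; rewrite /opadd /op0 => /eqP.
by rewrite -subr_eq subrr eq_sym => /eqP.
Qed.

Lemma dl_op0 : dl (op0 R) = op0 R.
Proof. by apply: op_double; rewrite -dl_add ?opadd0 //; exact: Bcal_op0. Qed.

Lemma dl_scale (c : CC R) {a : op R} : Bcal x1 a -> dl (opscale c a) = opscale c (dl a).
Proof.
move=> ha; have := dl_lin c ha Bcal_op0; rewrite opadd0 dl_op0 opadd0 //.
Qed.

Definition Id : op R := fun k l => (k == l)%:R * 1.

Lemma Id_VVinv : opmul (Vop R) (Vinvop R) = Id.
Proof.
apply: funext => k; apply: funext => l; rewrite opmul_V /Vinvop /Id mulr1.
by congr (_ %:R); apply/eqP/eqP; lia.
Qed.

Lemma dl_Vinv : dl (Vop R) = op0 R -> dl (Vinvop R) = op0 R.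
Proof.
move=> hV.
have hI : Bcal x1 Id by rewrite -Id_VVinv; apply: Bcal_mul; [exact: Bcal_V|exact: Bcal_Vinv].
have IdI : forall X, opmul X Id = X.
  by move=> X; apply: funext => k; apply: funext => l; rewrite (@opmul_diagr R (fun _ => 1)) mulr1.
have IId : forall X, opmul Id X = X.
  by move=> X; apply: funext => k; apply: funext => l; rewrite (@opmul_diagl R (fun _ => 1)) mul1r.
have d0 : dl Id = op0 R.
  by apply: op_double; rewrite -{1}(IdI Id) dl_mul // IdI IId.
have := d0; rewrite -Id_VVinv dl_mul ?hV ?opmul0l; [|exact: Bcal_V|exact: Bcal_Vinv].
move=> e; apply: funext => k; apply: funext => l.
have := congr1 (fun Y => Y (k + 1) l) e; rewrite /opadd /op0 opmul_V addrK add0r //.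
Qed.
End Der.

Lemma opadj_add (a b : op R) : opadj (opadd a b) = opadd (opadj a) (opadj b).
Proof. by apply: funext => k; apply: funext => l; rewrite /opadj /opadd rmorphD. Qed.
Lemma opadj_scale c (a : op R) : opadj (opscale c a) = opscale (c^*%C) (opadj a).
Proof. by apply: funext => k; apply: funext => l; rewrite /opadj /opscale rmorphM. Qed.
Lemma opadjK (a : op R) : opadj (opadj a) = a.
Proof. by apply: funext => k; apply: funext => l; rewrite /opadj conjcK. Qed.
Lemma opadj_M (f : G -> CC R) : opadj (Mop x1 f) = Mop x1 (fun x => (f x)^*%C).
Proof.
apply: funext => k; apply: funext => l; rewrite /opadj /Mop.
case: (eqVneq k l) => [->|ne]; first by rewrite !mul1r.
by rewrite !mul0r conjc0.
Qed.

Lemma B_der_unique (d1 d2 : op R -> op R) :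
  is_B_derivation x1 d1 -> is_B_derivation x1 d2 ->
  d1 (Vop R) = op0 R -> d2 (Vop R) = op0 R ->
  (forall f, Fspan f -> d1 (Mop x1 f) = Mop x1 (d f)) ->
  (forall f, Fspan f -> d2 (Mop x1 f) = Mop x1 (d f)) ->
  forall b, Bcal x1 b -> d1 b = d2 b.
Proof.
move=> h1 h2 V1 V2 M1 M2 b hb.
have Vi1 := dl_Vinv _ h1 V1; have Vi2 := dl_Vinv _ h2 V2.
pose P := fun b => Bcal x1 b /\ d1 b = d2 b /\ d1 (opadj b) = d2 (opadj b).
suff : P b by case=> _ [].
apply: (hb P); [split| | |].
- move=> a c [ha [e1 e2]] [hc [e3 e4]]; split; first exact: Bcal_add.
  have hA := Bcal_adj ha; have hC := Bcal_adj hc.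
  by rewrite opadj_add (dl_add _ h1 ha hc) (dl_add _ h2 ha hc) (dl_add _ h1 hA hC) (dl_add _ h2 hA hC) e1 e2 e3 e4.
- move=> c a [ha [e1 e2]]; split; first exact: Bcal_scale.
  have hA := Bcal_adj ha.
  by rewrite opadj_scale (dl_scale _ h1 _ ha) (dl_scale _ h2 _ ha) (dl_scale _ h1 _ hA) (dl_scale _ h2 _ hA) e1 e2.
- move=> a c [ha [e1 e2]] [hc [e3 e4]]; split; first exact: Bcal_mul.
  have [B [hB _]] := Bcal_PP _ ha.
  have hA := Bcal_adj ha; have hC := Bcal_adj hc.
  by rewrite (opadj_mul _ _ _ _ hB) (dl_mul _ h1 ha hc) (dl_mul _ h2 ha hc) (dl_mul _ h1 hC hA) (dl_mul _ h2 hC hA) e1 e2 e3 e4.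
- move=> a [ha [e1 e2]]; split; first exact: Bcal_adj.
  by rewrite opadjK.
- split; first exact: Bcal_V.
  by rewrite -Vinv_adj V1 V2 Vi1 Vi2.
- split; first exact: Bcal_Vinv.
  by rewrite Vi1 Vi2 Vinv_adj opadjK V1 V2.
- move=> chi hc; split; first by move=> S _ _ _ hM; apply: hM.
  have f1 := Fspan_char _ hc; have f2 := Fspan_char _ (charJ _ hc).
  by rewrite opadj_M (M1 _ f1) (M2 _ f1) (M1 _ f2) (M2 _ f2).
Qed.

Lemma main_sec :
  exists delta0 : op R -> op R,
    (is_B_derivation x1 delta0 /\
     delta0 (Vop R) = op0 R /\
     (forall f, Fspan f -> delta0 (Mop x1 f) = Mop x1 (d f)) /\
     is_invariant x1 delta0) /\
    (forall delta' : op R -> op R,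
       is_B_derivation x1 delta' ->
       delta' (Vop R) = op0 R ->
       (forall f, Fspan f -> delta' (Mop x1 f) = Mop x1 (d f)) ->
       forall b, Bcal x1 b -> delta' b = delta0 b).
Proof.
have hder : is_B_derivation x1 delta.
  split.
  - by move=> b hb; apply: Bset_delta; apply: Bcal_PP.
  - by move=> c a b ha hb; apply: delta_lin; apply: Bcal_PP.
  - by move=> a b ha hb; apply: delta_mul; apply: Bcal_PP.
exists delta; split; first split => //; first split.
- exact: delta_V.
- split; first exact: delta_M.
  by move=> th b hb; apply: delta_inv; apply: Bcal_PP.
move=> d' hd' hV hM b hb.
apply: (B_der_unique _ _ hd' hder) => //; [exact: delta_V | exact: delta_M].
Qed.
End Chars.

Theorem lemma3p10 (R : realType) (G : topologicalZmodType) (x1 : G)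
  (G_compact : compact [set: G]) (G_hausdorff : hausdorff_space G)
  (G_infinite : infinite_set [set: G])
  (x1_dense : closure (range (fun n : int => x1 *~ n)) = [set: G])
  (d : (G -> CC R) -> (G -> CC R))
  (d_der : is_F_derivation d)
  (d_rot : forall f, Fspan f -> d f \o phiG x1 = d (f \o phiG x1)) :
  exists delta : op R -> op R,
    (is_B_derivation x1 delta /\
     delta (Vop R) = op0 R /\
     (forall f, Fspan f -> delta (Mop x1 f) = Mop x1 (d f)) /\
     is_invariant x1 delta) /\
    (forall delta' : op R -> op R,
       is_B_derivation x1 delta' ->
       delta' (Vop R) = op0 R ->
       (forall f, Fspan f -> delta' (Mop x1 f) = Mop x1 (d f)) ->
       forall b, Bcal x1 b -> delta' b = delta b).
Proof. exact: (@main_sec R G x1 x1_dense d d_der d_rot). Qed.
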